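(* Let $G=(V,E)$ be a connected graph, let $T$ be a spanning tree of $G$ rooted in $s$ which is an $\mathcal L$-tree of some DFS on $G$, let $\rho$ be an arbitrary vertex order of $V$ ending with $s$, and let $\sigma$ be the order output by Ordering$(G,T,s,\rho)$. Let $v,w$ be vertices with $v\prec_\sigma w$ which have the same parent in $T$ and the same neighborhood in the set $Y=\{x\in V: x\prec_\sigma v\}$. Then $v$ is to the right of $w$ in $\rho$.
   Context: Graphs are finite, simple, undirected; $N(v)$ is the neighborhood of $v$. A vertex order is a linear order $\sigma=(v_1,\dots,v_n)$ of $V$; $\sigma(i)=v_i$; $u\prec_\sigma v$ means $u$ appears before (to the left of) $v$; $\rho^-$ is the reverse of $\rho$. DFS: a search that starts at a vertex and repeatedly visits an unvisited neighbor of the most recently visited vertex that still has an unvisited neighbor. DFS$^+(\tau)$ on a graph $H$: the DFS of $H$ starting at the last vertex of $\tau$ that, whenever several vertices may be visited next, visits the one rightmost in $\tau$. $\mathcal L$-tree of a vertex order $(v_1,\dots,v_n)$: the spanning tree rooted at $v_1$ with an edge from each $v_i$ ($i>1$) to its rightmost neighbor $v_j$ with $j<i$; $T$ rooted at $s$ is an $\mathcal L$-tree of DFS on $G$ if some DFS order of $G$ starting at $s$ has $\mathcal L$-tree $T$. Refining an ordered partition $(Q_1,\dots,Q_k)$ of $V$ with $S'$ replaces each $Q_i$ by $(Q_i\cap S',Q_i\setminus S')$ whenever both are nonempty. Procedure Ordering$(G,T,s,\rho)$: let $\beta$ be the reverse of a BFS order of $T$ starting at $s$; $\mathcal Q=(V)$;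 for $i=1,\dots,n$, with $v=\beta(i)$, refine $\mathcal Q$ with $\{w\in N(v): w\prec_\beta v\}$; order the vertices inside each class of $\mathcal Q$ according to $\rho^-$ and move $\{s\}$ to the leftmost position; let $\tau$ be the reverse of the resulting order of all vertices; output $\sigma=$ DFS$^+(\tau)$ on $T$. *)

(* Defs.v *)
From mathcomp Require Import all_boot.
Set Implicit Arguments. Unset Strict Implicit. Unset Printing Implicit Defensive.

Section Defs.
Variable V : finType.

Definition is_vorder (sg : seq V) : Prop := uniq sg /\ forall x : V, x \in sg.

Definition prec (sg : seq V) (u v : V) : bool := index u sg < index v sg.

Definition all_visited (H : rel V) (pre : seq V) (x : V) : Prop :=
  forall y, H x y -> y \in pre.

(* sg is a DFS order of H starting at r: each vertex sg(i), i > 0, is a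
   neighbor of the most recently visited vertex sg(j) still having an
   unvisited neighbor. *)
Definition is_dfs (H : rel V) (r : V) (sg : seq V) : Prop :=
  is_vorder sg /\ head r sg = r /\
  forall i, 0 < i < size sg ->
    exists j, j < i /\ H (nth r sg j) (nth r sg i) /\
      forall k, j < k < i -> all_visited H (take i sg) (nth r sg k).

(* DFS^+(tau) on H: the DFS of H starting at the last vertex r of tau which,
   whenever several vertices may be visited next, visits the one rightmost
   in tau. *)
Definition is_dfs_plus (H : rel V) (tau : seq V) (sg : seq V) : Prop :=
  exists r : V, [/\ tau != [::], last r tau = r,
    is_vorder sg, head r sg = r &
    forall i, 0 < i < size sg ->
      exists j, [/\ j < i, H (nth r sg j) (nth r sg i),
        forall k, j < k < i -> all_visited H (take i sg) (nth r sg k) &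
        forall y, H (nth r sg j) y -> y \notin take i sg ->
          index y tau <= index (nth r sg i) tau]].

(* sg is a BFS order of H starting at r: each vertex sg(i), i > 0, is a
   neighbor of the earliest visited vertex sg(j) still having an
   unvisited neighbor. *)
Definition is_bfs (H : rel V) (r : V) (sg : seq V) : Prop :=
  is_vorder sg /\ head r sg = r /\
  forall i, 0 < i < size sg ->
    exists j, j < i /\ H (nth r sg j) (nth r sg i) /\
      forall k, k < j -> all_visited H (take i sg) (nth r sg k).

Definition Lparent (e : rel V) (sg : seq V) (x p : V) : bool :=
  [&& prec sg p x, e x p &
      [forall z, (e x z && prec sg z x) ==> (index z sg <= index p sg)]].

Definition Ltree (e : rel V) (sg : seq V) : rel V :=
  fun x y => Lparent e sg x y || Lparent e sg y x.

Definition is_Ltree_of_DFS (e t : rel V) (s : V) : Prop :=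
  exists sg0, is_dfs e s sg0 /\ forall x y, t x y = Ltree e sg0 x y.

Definition tparent (t : rel V) (s v p : V) : bool :=
  [&& v != s, t v p &
      connect (fun a b => [&& t a b, a != v & b != v]) p s].

Definition refine (S : pred V) (Q : seq (seq V)) : seq (seq V) :=
  flatten [seq (let a := [seq x <- q | S x] in
                let b := [seq x <- q | ~~ S x] in
                if (a != [::]) && (b != [::]) then [:: a; b] else [:: q])
          | q <- Q].

(* Procedure Ordering(G, T, s, rho), given the chosen BFS order bfs of T
   from s: beta = rev bfs; returns tau (the order on which DFS^+ is run). *)
Definition ordering_tau (e : rel V) (s : V) (rho bfs : seq V) : seq V :=
  let beta := rev bfs in
  let Q := foldl (fun Q v => refine (fun w => e v w && prec beta w v) Q)
                 [:: enum V] beta in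
  (* within each class: order according to rho^- *)
  let Qs := [seq sort (fun x y => index y rho <= index x rho) q | q <- Q] in
  let ord := s :: [seq x <- flatten Qs | x != s] in
  rev ord.

Definition ordering_output (e t : rel V) (s : V) (rho sg : seq V) : Prop :=
  exists bfs, is_bfs t s bfs /\ is_dfs_plus t (ordering_tau e s rho bfs) sg.
End Defs.

(* Main.v *)
Require Import Defs.
From mathcomp Require Import all_boot.
From mathcomp Require Import zify.
Set Implicit Arguments. Unset Strict Implicit. Unset Printing Implicit Defensive.

Lemma index_rev_sum (T : eqType) (l : seq T) (x : T) :
  uniq l -> x \in l -> index x (rev l) + index x l = (size l).-1.
Proof.
elim: l => [|a l IH] //= /andP[anl ul].
rewrite rev_cons -cats1 index_cat mem_rev in_cons size_rev.
case: (eqVneq x a) => [->|neq] /=.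
  by rewrite (negbTE anl) eqxx /= addn0 addn0.
move=> xl; rewrite xl /=. idtac.
have := IH ul xl; have := index_mem x l; rewrite xl => hlt; lia.
Qed.

Lemma index_rev_lt (T : eqType) (l : seq T) (x y : T) :
  uniq l -> x \in l -> y \in l ->
  (index x (rev l) < index y (rev l)) = (index y l < index x l).
Proof.
move=> ul xl yl.
have hx := index_rev_sum ul xl; have hy := index_rev_sum ul yl.
have := index_mem x l; have := index_mem y l; rewrite xl yl => h1 h2.
apply/idP/idP => H; lia.
Qed.

Lemma subseq_index_lt (T : eqType) (l1 l2 : seq T) (x y : T) :
  subseq l1 l2 -> uniq l2 -> x \in l1 -> y \in l1 ->
  index x l1 < index y l1 -> index x l2 < index y l2.
Proof.
elim: l2 l1 => [|a l2 IH] [|b l1] //=.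
move=> + /andP[anl ul]; case: (eqVneq b a) => [->|neq] hs.
  + rewrite !in_cons.
    case: (eqVneq x a) => [->|xa]; case: (eqVneq y a) => [->|ya] //=.
    rewrite !ltnS => xl yl; exact: IH.
    have sub := mem_subseq hs.
    move=> xl yl hlt.
    have xa : a != x by apply/eqP => ax; by move: anl; rewrite ax (sub _ xl).
    have ya : a != y by apply/eqP => ax; by move: anl; rewrite ax (sub _ yl).
    rewrite (negbTE xa) (negbTE ya) ltnS.
    exact: IH hs ul xl yl hlt.
Qed.

Lemma subseq_index (T : eqType) (l1 l2 : seq T) (x y : T) :
  subseq l1 l2 -> uniq l2 -> x \in l1 -> y \in l1 ->
  (index x l1 < index y l1) = (index x l2 < index y l2).
Proof.
move=> hs ul xl yl.
case h: (index x l1 < index y l1); first by rewrite (subseq_index_lt hs ul xl yl h).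
have u1 := subseq_uniq hs ul.
case: (eqVneq x y) => [->|xy]; first by rewrite ltnn.
have h' : index y l1 < index x l1.
  rewrite ltn_neqAle leqNgt h andbT; apply/eqP => e1.
  by move/eqP: xy; apply; apply: (index_inj x xl yl); rewrite e1.
have := subseq_index_lt hs ul yl xl h'; lia.
Qed.

Lemma subseq_flatten (T : eqType) (q : seq T) (L : seq (seq T)) :
  q \in L -> subseq q (flatten L).
Proof.
elim: L => [|a L IH] //=; rewrite in_cons => /orP[/eqP ->|h].
  exact: prefix_subseq.
exact: subseq_trans (IH h) (suffix_subseq _ _).
Qed.

Lemma search_par (V : finType) (t P : rel V) (s : V) (ord : seq V) :
  (forall x y, t x y = P x y || P y x) ->
  (forall x y z, P x y -> P x z -> y = z) ->
  (forall y, ~~ P s y) ->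
  is_vorder ord -> head s ord = s ->
  (forall i, 0 < i < size ord -> exists j, j < i /\ t (nth s ord j) (nth s ord i)) ->
  forall x y, P x y -> index y ord < index x ord.
Proof.
move=> ht Pf Ps [uo allo] hd hs.
suff H : forall n x y, index x ord = n -> P x y -> index y ord < index x ord.
  by move=> x y; exact: H.
elim/ltn_ind => n IH x y hn Pxy.
have xo := allo x.
have szo := index_mem x ord; rewrite xo in szo.
case: n hn IH => [|i] hn IH.
  have xs : x = s by rewrite -(nth_index s xo) hn nth0 hd.
  by move: (Ps y); rewrite -xs Pxy.
have [j [ji tj]] : exists j, j < i.+1 /\ t (nth s ord j) (nth s ord i.+1).
  by apply: hs; rewrite ltn0Sn /= -hn szo.
have jsz : j < size ord by apply: ltn_trans ji _; rewrite -hn.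
rewrite -hn nth_index // ht in tj; case/orP: tj => h; last first.
  by rewrite -(Pf _ _ _ h Pxy) index_uniq // hn.
have := IH j ji (nth s ord j) x (index_uniq s jsz uo) h.
rewrite index_uniq // hn => h2; have := ltn_trans h2 ji; by rewrite ltnn.
Qed.

Lemma anc_le (V : finType) (P : rel V) (ord : seq V) :
  (forall x y, P x y -> index y ord < index x ord) ->
  forall x y, connect P x y -> index y ord <= index x ord.
Proof.
move=> hP x y /connectP[p pth ->]; elim: p x pth => [|c p IH] x //= /andP[Pxc pth].
exact: leq_trans (IH _ pth) (ltnW (hP _ _ Pxc)).
Qed.

Lemma anc_step (V : finType) (P : rel V) x y :
  connect P x y -> x != y -> exists c, P x c /\ connect P c y.
Proof.
move=> /connectP[[|c p] /= pth ->]; first by rewrite eqxx.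
move: pth => /andP[Pxc pth] _; exists c; split => //.
by apply/connectP; exists p.
Qed.

Lemma tparent_P (V : finType) (t P : rel V) (s v p : V) :
  (forall x y, t x y = P x y || P y x) ->
  (forall x y z, P x y -> P x z -> y = z) ->
  (forall y, ~~ P s y) ->
  tparent t s v p -> P v p.
Proof.
move=> ht Pf Ps /and3P[vs tvp cps].
set R := (fun a b => [&& t a b, a != v & b != v]) in cps.
have key : forall a, connect R a s -> ~~ connect P a v.
  move=> a /connectP[q pth es]; elim: q a pth es => [|b q IH] a /=.
    move=> _ <-; apply/negP => /anc_step /(_ (ltac:(by rewrite eq_sym))) [c [Psc _]].
    by move: (Ps c); rewrite Psc.
  move=> /andP[/and3P[tab av bv] pth] es; have Hb := IH b pth es.
  apply/negP => cav; move: ht tab => -> /orP[Pab|Pba].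
    have [c [Pac cv]] := anc_step cav av.
    by move: Hb; rewrite (Pf _ _ _ Pab Pac) cv.
  by move: Hb; rewrite (connect_trans (connect1 Pba) cav).
move: tvp; rewrite ht => /orP[//|Ppv].
by move: (key p cps); rewrite connect1.
Qed.

Lemma Lparent_fun (V : finType) (e : rel V) (sg : seq V) x y z :
  is_vorder sg -> Lparent e sg x y -> Lparent e sg x z -> y = z.
Proof.
move=> [u al] /and3P[py ey /forallP hy] /and3P[pz ez /forallP hz].
have h1 := implyP (hy z) (introT andP (conj ez pz)).
have h2 := implyP (hz y) (introT andP (conj ey py)).
apply: (index_inj x (al y) (al z)); apply/eqP; rewrite eqn_leq h1 h2 //.
Qed.

Lemma Lparent_s (V : finType) (e : rel V) (sg : seq V) s y :
  is_vorder sg -> head s sg = s -> ~~ Lparent e sg s y.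
Proof.
move=> [u al] hd; apply/negP => /and3P[py _ _]; move: py.
have : index s sg = 0.
  by case: sg u al hd => [|a l] _ al //= ->; rewrite eqxx.
by rewrite /prec => ->.
Qed.

Lemma dfs_finish (V : finType) (e : rel V) (s : V) (sg : seq V) :
  symmetric e -> is_dfs e s sg ->
  forall i a, index a sg < i -> i < size sg ->
    ~~ connect (Lparent e sg) (nth s sg i) a -> all_visited e (take i sg) a.
Proof.
move=> esym [[u al] [hd hs]].
elim/ltn_ind => i IH a ai isz nc.
have [j [ji [ej hk]]] : exists j, j < i /\ e (nth s sg j) (nth s sg i) /\
      forall k, j < k < i -> all_visited e (take i sg) (nth s sg k).
  by apply: hs; rewrite isz andbT; apply: leq_ltn_trans ai.
have jsz : j < size sg by apply: ltn_trans ji isz.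
set c := nth s sg i in nc ej hk.
have ic : index c sg = i by rewrite index_uniq.
have ij : index (nth s sg j) sg = j by rewrite index_uniq.
have Pcj : Lparent e sg c (nth s sg j).
  apply/and3P; split.
  - by rewrite /prec ic ij.
  - by rewrite esym.
  - apply/forallP => z; apply/implyP => /andP[ecz pz].
    rewrite ij leqNgt; apply/negP => jz.
    have := hk (index z sg); rewrite jz /=.
    move: pz; rewrite /prec ic => -> /(_ isT).
    rewrite nth_index // => /(_ c); rewrite esym ecz => /(_ isT).
    by rewrite in_take // ic ltnn.
have naj : a != nth s sg j.
  by apply/eqP => aj; move: nc; rewrite aj connect1.
case: (ltngtP (index a sg) j) => h.
- move=> y eay.
  have := IH j ji a h jsz; rewrite /all_visited.
  have nc' : ~~ connect (Lparent e sg) (nth s sg j) a.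
    by apply/negP => cj; move: nc; rewrite (connect_trans (connect1 Pcj) cj).
  move=> /(_ nc' y eay); rewrite !in_take // => yj.
  exact: ltn_trans yj ji.
- have := hk (index a sg); rewrite h ai /= nth_index //; exact.
- by move: naj; rewrite -h nth_index // eqxx.
Qed.

Lemma dfs_anc (V : finType) (e : rel V) (s : V) (sg : seq V) :
  symmetric e -> is_dfs e s sg ->
  forall a b, e a b -> index a sg < index b sg -> connect (Lparent e sg) b a.
Proof.
move=> esym hd a b eab ab.
have [[u al] _] := hd.
apply/negPn/negP => nc.
have := dfs_finish esym hd ab; rewrite index_mem al nth_index // => /(_ isT nc b eab).
by rewrite in_take // ltnn.
Qed.

Definition hasb (V : finType) (v w : V) (Q : seq (seq V)) :=
  has (fun q => (v \in q) && (w \in q)) Q.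

Lemma refine_perm (V : finType) (S : pred V) (Q : seq (seq V)) :
  perm_eq (flatten (refine S Q)) (flatten Q).
Proof.
elim: Q => [|q Q IH] //=.
rewrite /refine /= flatten_cat; apply: perm_cat => //.
case: ifP => _ /=; rewrite ?cats0 //.
by rewrite perm_filterC.
Qed.

Lemma refine_has (V : finType) (S : pred V) (Q : seq (seq V)) v w :
  S v = S w -> hasb v w Q -> hasb v w (refine S Q).
Proof.
move=> Svw; elim: Q => [|q Q IH] //=.
rewrite /refine /= /hasb has_cat => /orP[/andP[vq wq]|h]; last first.
  by apply/orP; right; exact: IH.
apply/orP; left.
case: ifP => _ /=; last by rewrite vq wq.
case Sv: (S v).
  by rewrite !mem_filter Sv -Svw Sv vq wq.
by rewrite !mem_filter Sv -Svw Sv vq wq orbT.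
Qed.

Lemma foldl_inv (V : finType) (S : V -> pred V) v w (l : seq V) :
  (forall x, S x v = S x w) ->
  forall Q, perm_eq (flatten Q) (enum V) -> hasb v w Q ->
  let Q' := foldl (fun Q x => refine (S x) Q) Q l in
  perm_eq (flatten Q') (enum V) /\ hasb v w Q'.
Proof.
move=> hS; elim: l => [|x l IH] Q hp hh //=.
apply: IH; last exact: refine_has.
exact: perm_trans (refine_perm _ _) hp.
Qed.

Lemma perm_flatten_sort (V : finType) (leT : rel V) (Q : seq (seq V)) :
  perm_eq (flatten [seq sort leT q | q <- Q]) (flatten Q).
Proof.
elim: Q => [|q Q IH] //=; apply: perm_cat => //.
by rewrite perm_sort.
Qed.

Lemma tau_order (V : finType) (e : rel V) (s : V) (rho bfs : seq V) (v w : V) :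
  is_vorder rho -> v != s -> w != s -> v != w ->
  (forall x, (e x v && prec (rev bfs) v x) = (e x w && prec (rev bfs) w x)) ->
  index w (ordering_tau e s rho bfs) <= index v (ordering_tau e s rho bfs) ->
  prec rho w v.
Proof.
move=> [urho alrho] vs ws vw hS.
have [hperm hhas] := @foldl_inv V (fun x y => e x y && prec (rev bfs) y x) v w (rev bfs) hS
   [:: enum V] ltac:(by rewrite /= cats0) ltac:(by rewrite /hasb /= !mem_enum).
rewrite /ordering_tau.
move: hperm hhas.
set Q := foldl _ _ _.
move=> hperm /hasP [q qQ /andP[vq wq]].
set leT := (fun x y : V => index y rho <= index x rho).
set F := flatten _.
set ord := s :: _.
have pF : perm_eq F (enum V) by apply: perm_trans (perm_flatten_sort _ _) hperm.
have uF : uniq F by rewrite (perm_uniq pF) enum_uniq.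
have mF : forall x, x \in F by move=> x; rewrite (perm_mem pF) mem_enum.
have uo : uniq ord by rewrite /ord /= mem_filter eqxx /= filter_uniq.
have mo : forall x, x \in ord.
  by move=> x; rewrite /ord in_cons mem_filter mF andbT; case: eqP.
move=> h.
have h' : index w (rev ord) < index v (rev ord).
  rewrite ltn_neqAle h andbT; apply/negP => /eqP hi.
  have wr : w \in rev ord by rewrite mem_rev.
  have vr : v \in rev ord by rewrite mem_rev.
  by move: vw; rewrite (index_inj w wr vr hi) eqxx.
rewrite index_rev_lt // /ord /= eq_sym (negbTE vs) eq_sym (negbTE ws) ltnS in h'.
rewrite (subseq_index (filter_subseq (fun x => x != s) F) uF) ?mem_filter ?vs ?ws ?mF // in h'.
have sq : subseq (sort leT q) F by apply: subseq_flatten; exact: map_f.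
rewrite -(subseq_index sq uF) ?mem_sort // in h'.
have tr : transitive leT by move=> y x z h1 h2; exact: leq_trans h2 h1.
have to : total leT by move=> x y; exact: leq_total.
have := sorted_ltn_index tr (sort_sorted to q); rewrite /leT.
move=> /(_ v w); rewrite !mem_sort => /(_ vq wq h') le.
rewrite /prec ltn_neqAle le andbT; apply/eqP => hi.
by move: vw; rewrite (index_inj w (alrho w) (alrho v) hi) eqxx.
Qed.

Theorem lemma10 (V : finType) (e t : rel V) (s : V) (rho sg : seq V) (v w : V) :
  symmetric e -> irreflexive e -> (forall x y, connect e x y) ->
  is_Ltree_of_DFS e t s ->
  is_vorder rho -> last s rho = s ->
  ordering_output e t s rho sg ->
  prec sg v w ->
  (exists p, tparent t s v p && tparent t s w p) ->
  (forall x, prec sg x v -> e x v = e x w) ->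
  prec rho w v.
Proof.
move=> esym eirr _ [sg0 [hdfs ht]] [urho alrho] _ [bfs [hbfs hplus]] vw
  [p /andP[tpv tpw]] hN.
set P := Lparent e sg0.
have ht' : forall x y, t x y = P x y || P y x by move=> x y; rewrite ht.
have [vo0 [hd0 _]] := hdfs.
have Pf : forall x y z, P x y -> P x z -> y = z := fun x y z => Lparent_fun vo0.
have Ps : forall y, ~~ P s y by move=> y; exact: Lparent_s.
have Pv := tparent_P ht' Pf Ps tpv; have Pw := tparent_P ht' Pf Ps tpw.
have vs : v != s by case/and3P: tpv.
have ws : w != s by case/and3P: tpw.
have [bvo [bhd bs]] := hbfs.
have bpar : forall x y, P x y -> index y bfs < index x bfs.
  apply: (search_par ht' Pf Ps bvo bhd) => i /bs [j [? [? _]]]; by exists j.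
set tau := ordering_tau e s rho bfs in hplus.
have [r [_ lastr svo shd hsg]] := hplus.
have rs : r = s.
  by rewrite -lastr /tau /ordering_tau rev_cons last_rcons.
subst r.
have sgpar : forall x y, P x y -> index y sg < index x sg.
  apply: (search_par ht' Pf Ps svo shd) => i /hsg [j [? ? _ _]]; by exists j.
have tauwv : index w tau <= index v tau.
  have [usg alsg] := svo.
  have vpos : 0 < index v sg < size sg.
    rewrite index_mem alsg andbT lt0n; apply/negP => /eqP h0.
    by move: vs; rewrite -(nth_index s (alsg v)) h0 nth0 shd eqxx.
  have [j [ji tjv _ hy]] := hsg _ vpos.
  have jsz : j < size sg by apply: ltn_trans ji _; case/andP: vpos.
  rewrite nth_index // in tjv hy.
  have njp : nth s sg j = p.
    move: tjv; rewrite ht' => /orP[h|h]; last exact: Pf h Pv.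
    have := sgpar _ _ h; rewrite index_uniq // => h2.
    by have := ltn_trans h2 ji; rewrite ltnn.
  rewrite njp in hy; apply: hy; first by rewrite ht' Pw orbT.
  by rewrite in_take // -leqNgt ltnW.
(* the core: v and w are never separated *)
have [ubfs albfs] := bvo.
have core : forall a b, P a p -> P b p ->
    (forall x, prec sg x v -> e x a = e x b) ->
    forall x, e x a -> index x bfs < index a bfs ->
    e x b && (index x bfs < index b bfs).
  move=> a b Pa Pb hab x exa xa.
  have xna : x != a by apply/eqP => h; move: exa; rewrite h eirr.
  have [_ al0] := vo0.
  case: (ltngtP (index x sg0) (index a sg0)) => h.
  - have cax := dfs_anc esym hdfs exa h.
    have anx : a != x by rewrite eq_sym.
    have [c [Pac ccx]] := anc_step cax anx.
    rewrite -(Pf _ _ _ Pa Pac) in ccx.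
    have h1 := anc_le bpar ccx; have h2 := bpar _ _ Pb.
    have h3 := anc_le sgpar ccx; have h4 := sgpar _ _ Pv.
    rewrite -hab; last by rewrite /prec; exact: leq_ltn_trans h3 h4.
    by rewrite exa /=; exact: leq_ltn_trans h1 h2.
  - have eax : e a x by rewrite esym.
    have cxa := dfs_anc esym hdfs eax h.
    have [c [Pxc cca]] := anc_step cxa xna.
    have h1 := anc_le bpar cca; have h2 := bpar _ _ Pxc.
    by have := leq_ltn_trans h1 h2; rewrite ltnNge ltnW.
  - by move: xna; rewrite (index_inj x (al0 x) (al0 a) h) eqxx.
apply: (tau_order (e := e) (bfs := bfs) (conj urho alrho) vs ws _ _ tauwv).
  by apply/eqP => h; move: vw; rewrite /prec h ltnn.
have hvw := core v w Pv Pw hN.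
have hwv := core w v Pw Pv (fun x hx => Logic.eq_sym (hN x hx)).
move=> x; rewrite /prec !index_rev_lt //.
apply/idP/idP => /andP[h1 h2]; [exact: hvw | exact: hwv].
Qed.
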